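(* Let $X$ be a complex torus of dimension $g$, with $\omega \in \mathrm{H}^2(X, \mathbf{Z}/n)$. Suppose that $e_1, \dots, e_{2g}$ is a basis for $\mathrm{H}^1(X, \mathbf{Z})$ such that \[ \omega = \sum_{i = 1}^r a_i e_{i} \wedge e_{i + g}, \] for $0 \neq a_i \in \mathbf{Z}/n$ and $0 \leq r \leq g$. Then \[ \mathrm{Ann}(\omega) = \prod_{i = 1}^r \mathrm{Ann}_{\mathbf{Z}}(a_i). \]
   Context: $\mathrm{Ann}(\omega)$ is the least degree of a finite isogeny $f:X' \to X$ such that $f^*\omega = 0$. For $a \in \mathbf{Z}/n$, $\mathrm{Ann}_{\mathbf{Z}}(a)$ is the positive generator of the annihilator ideal of $a$ in $\mathbf{Z}$. *)

(* Defs.v *)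
(* Lattice model of a complex torus X = C^g / Lambda,
   Lambda = Z^(2g) represented as row vectors 'rV[int]_(g+g). *)
From HB Require Import structures.
From mathcomp Require Import all_boot all_order all_algebra all_fingroup.
Set Implicit Arguments. Unset Strict Implicit. Unset Printing Implicit Defensive.
Import GRing.Theory Num.Theory.
Local Open Scope ring_scope.

(* The linear functional on Lambda given by the j-th basis vector of
   H^1(X,Z) = Hom(Lambda,Z); the basis is encoded by the columns of an
   integral matrix E (a basis iff E is unimodular, i.e. E \in unitmx). *)
Definition coh1 (g : nat) (E : 'M[int]_(g + g)) (j : 'I_(g + g))
  (x : 'rV[int]_(g + g)) : int := (x *m E) 0 j.

(* The alternating form omega = sum_{i<r} a_i e_i /\ e_{i+g}, an element of
   H^2(X, Z/n) = Alt^2(Lambda, Z/n), evaluated at (x, y). *)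
Definition omega (n g r : nat) (hr : (r <= g)%N) (E : 'M[int]_(g + g))
  (a : 'I_r -> 'Z_n) (x y : 'rV[int]_(g + g)) : 'Z_n :=
  \sum_(i < r)
    a i * ((coh1 E (lshift g (widen_ord hr i)) x *
            coh1 E (rshift g (widen_ord hr i)) y -
            coh1 E (rshift g (widen_ord hr i)) x *
            coh1 E (lshift g (widen_ord hr i)) y)%:~R).

(* f^* omega = 0 for the isogeny f : C^g/Lambda' -> C^g/Lambda, where
   Lambda' is the sublattice spanned by the rows of M (finite index iff
   det M != 0, and then deg f = |det M|). *)
Definition pullback_zero (n g r : nat) (hr : (r <= g)%N) (E : 'M[int]_(g + g))
  (a : 'I_r -> 'Z_n) (M : 'M[int]_(g + g)) : Prop :=
  forall k l : 'I_(g + g), omega hr E a (row k M) (row l M) = 0.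

(* Ann_Z(a) for a in Z/n: positive generator of the annihilator ideal,
   i.e. the additive order of a. *)
Definition AnnZ (n : nat) (a : 'Z_n) : nat := #[a]%g.

(* Main.v *)
Require Import Defs.
From HB Require Import structures.
From mathcomp Require Import all_boot all_order all_algebra all_fingroup cyclic.
From mathcomp Require Import ring.
Set Implicit Arguments. Unset Strict Implicit. Unset Printing Implicit Defensive.
Import GRing.Theory Num.Theory.
Local Open Scope ring_scope.

Section U.
Local Open Scope nat_scope.
Lemma unit_lift (n x m : nat) : 0 < n -> coprime x m ->
  coprime (x + m * \prod_(p <- primes n | ~~ (p %| x)) p) n.
Proof.
move=> n0 cxm.
set y := \prod_(p <- _ | _) p; set u := x + m * y.
apply/negPn/negP => hnc.
have g1 : 1 < gcdn u n.
  by rewrite ltn_neqAle eq_sym hnc gcdn_gt0 n0 orbT.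
set p := pdiv (gcdn u n).
have pp := pdiv_prime g1.
have pu : p %| u := dvdn_trans (pdiv_dvd _) (dvdn_gcdl _ _).
have pn : p %| n := dvdn_trans (pdiv_dvd _) (dvdn_gcdr _ _).
have pin : p \in primes n by rewrite mem_primes pp n0 pn.
case px: (p %| x).
- move: pu; rewrite /u dvdn_addr // Euclid_dvdM // => /orP [pm | py].
  + have: p %| gcdn x m by rewrite dvdn_gcd px pm.
    by rewrite (eqP cxm) Euclid_dvd1.
  + move: py; rewrite /y Euclid_dvd_prod // big_has_cond => /hasP [q qin /andP [qx pq]].
    move: qin; rewrite mem_primes => /and3P [qp _ _].
    by move: pq; rewrite dvdn_prime2 // => /eqP eq; move: qx; rewrite -eq px.
- have py : p %| y by rewrite /y (big_rem p) //= px /= dvdn_mulr.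
  by move: pu; rewrite /u dvdn_addl ?px // dvdn_mull.
Qed.

End U.

Lemma intr_Zp_eq0 (n : nat) (hn : (1 < n)%N) (z : int) :
  ((z%:~R : 'Z_n) == 0) = (n%:Z %| z)%Z.
Proof.
case: z => m.
  by rewrite -pmulrn -val_eqE /= val_Zp_nat // dvdzE.
by rewrite NegzE mulrNz oppr_eq0 -pmulrn -val_eqE /= val_Zp_nat // dvdzE.
Qed.

Lemma order_Zp (n : nat) (hn : (1 < n)%N) (x : 'Z_n) :
  #[x]%g = (n %/ gcdn n x)%N.
Proof.
rewrite -{1}(Zp1_expgz x) orderXgcd order_Zp1.
by move: (x : nat); rewrite Zp_cast.
Qed.

Lemma Zp_mul_order (n : nat) (x : 'Z_n) (z : int) :
  (#[x]%g %| z)%Z -> x * z%:~R = 0.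
Proof.
move=> /dvdzP [q ->].
have h : x * (#[x]%g)%:R = 0.
  by rewrite mulr_natr Zp_mulrn -Zp_expg expg_order.
by rewrite intrM mulrCA -pmulrn h mulr0.
Qed.

Definition fo (n r : nat) (a : 'I_r -> 'Z_n) (j : nat) : nat :=
  if (insub j : option 'I_r) is Some i then AnnZ (a i) else 1%N.

Lemma fo_widen n r g (hr : (r <= g)%N) (a : 'I_r -> 'Z_n) (i : 'I_r) :
  fo a (widen_ord hr i) = AnnZ (a i).
Proof. by rewrite /fo /= valK. Qed.

Lemma fo_out n r (a : 'I_r -> 'Z_n) j : (r <= j)%N -> fo a j = 1%N.
Proof. by move=> h; rewrite /fo insubN // -leqNgt. Qed.

Lemma prod_fo n r g (hr : (r <= g)%N) (a : 'I_r -> 'Z_n) :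
  (\prod_(j < g + g) fo a j = \prod_(i < r) AnnZ (a i))%N.
Proof.
rewrite big_split_ord /= [X in (_ * X)%N]big1 ?muln1; last first.
  by move=> j _; rewrite fo_out // (leq_trans hr) // leq_addr.
transitivity (\prod_(i < g) fo a i)%N.
  by apply: eq_bigr.
rewrite [RHS](eq_bigr (fun i : 'I_r => fo a i)); last first.
  by move=> i _; rewrite -(fo_widen hr).
rewrite (big_ord_widen g (fo a) hr) [RHS]big_mkcond /=.
apply: eq_bigr => i _; case: ifP => //.
by move/negbT; rewrite -leqNgt => /fo_out ->.
Qed.

Lemma existence (n g r : nat) (hr : (r <= g)%N)
  (E : 'M[int]_(g + g)) (hE : E \in unitmx) (a : 'I_r -> 'Z_n) :
  exists M : 'M[int]_(g + g),
      \det M != 0 /\ pullback_zero hr E a M /\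
      `|\det M|%N = (\prod_(i < r) AnnZ (a i))%N.
Proof.
pose D : 'M[int]_(g + g) := diag_mx (\row_(j < g + g) ((fo a j)%:Z)).
exists (D *m invmx E).
have hME : D *m invmx E *m E = D by rewrite -mulmxA mulVmx // mulmx1.
have hdetE : `|\det E|%N = 1%N by move: hE; rewrite unitmxE => /orP [] /eqP ->.
have hdetD : \det D = (\prod_(i < r) AnnZ (a i))%N%:Z.
  rewrite det_diag -(prod_fo hr).
  rewrite (big_morph Posz PoszM (erefl _)).
  by apply: eq_bigr => i _; rewrite mxE.
have habs : `|\det (D *m invmx E)|%N = (\prod_(i < r) AnnZ (a i))%N.
  by rewrite -[LHS]muln1 -[X in (_ * X)%N]hdetE -abszM -det_mulmx hME hdetD.
split.
  by rewrite -absz_eq0 habs -lt0n prodn_gt0 // => i; rewrite /AnnZ order_gt0.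
split => //.
move=> k l; rewrite /omega; apply: big1 => i _.
rewrite /coh1 -!row_mul hME !mxE.
apply: Zp_mul_order.
have hD : forall k' : 'I_(g + g),
  (#[a i]%g %| (fo a k')%:Z *+ (k' == lshift g (widen_ord hr i)))%Z.
  move=> k'; case: eqP => [->|_]; last by rewrite mulr0n dvdz0.
  rewrite mulr1n (_ : fo a (lshift g (widen_ord hr i)) = AnnZ (a i)) ?dvdzz //.
  exact: (fo_widen hr).
by apply: rpredB; [apply: dvdz_mulr | apply: dvdz_mull].
Qed.

Definition al (n r : nat) (a : 'I_r -> 'Z_n) (j : nat) : nat :=
  if (insub j : option 'I_r) is Some i then val (a i) else 0%N.

Section Lower.
Variables (n r : nat) (a : 'I_r -> 'Z_n).
Definition cc j := gcdn (al a j) n.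
Definition mm j := (n %/ cc j)%N.
Definition xx j := (al a j %/ cc j)%N.
Definition yy j := (\prod_(p <- primes n | ~~ (p %| xx j)) p)%N.
Definition uu j := (xx j + mm j * yy j)%N.
Definition be j := (cc j * uu j)%N.
End Lower.

Lemma al_widen n r g (hr : (r <= g)%N) (a : 'I_r -> 'Z_n) (i : 'I_r) :
  al a (widen_ord hr i) = a i.
Proof. by rewrite /al /= valK. Qed.

Lemma al_out n r (a : 'I_r -> 'Z_n) j : (r <= j)%N -> al a j = 0%N.
Proof. by move=> h; rewrite /al insubN // -leqNgt. Qed.

Section Facts.
Variables (n r : nat) (hn : (1 < n)%N) (a : 'I_r -> 'Z_n) (j : nat).
Let n0 : (0 < n)%N. Proof. exact: ltnW. Qed.

Lemma cc_gt0 : (0 < cc a j)%N.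
Proof. by rewrite /cc gcdn_gt0 n0 orbT. Qed.

Lemma cc_mm : (cc a j * mm a j)%N = n.
Proof. by rewrite /mm mulnC divnK // /cc dvdn_gcdr. Qed.

Lemma cc_xx : (cc a j * xx a j)%N = al a j.
Proof. by rewrite /xx mulnC divnK // /cc dvdn_gcdl. Qed.

Lemma be_eq : be a j = (al a j + n * yy a j)%N.
Proof. by rewrite /be /uu mulnDr mulnA cc_xx cc_mm. Qed.

Lemma cop_xx : coprime (xx a j) (mm a j).
Proof.
have c0 := cc_gt0.
rewrite /coprime -(eqn_pmul2r c0) mul1n muln_gcdl.
by rewrite [X in gcdn X _]mulnC [X in gcdn _ X]mulnC cc_xx cc_mm.
Qed.

Lemma cop_uu : coprime (uu a j) n.
Proof. exact: unit_lift n0 cop_xx. Qed.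
End Facts.

Lemma mm_widen n r g (hn : (1 < n)%N) (hr : (r <= g)%N) (a : 'I_r -> 'Z_n) (i : 'I_r) :
  mm a (widen_ord hr i) = AnnZ (a i).
Proof. by rewrite /AnnZ (order_Zp hn) /mm /cc al_widen gcdnC. Qed.

Lemma mm_out n r (a : 'I_r -> 'Z_n) j : (0 < n)%N -> (r <= j)%N -> mm a j = 1%N.
Proof. by move=> n0 h; rewrite /mm /cc al_out // gcd0n divnn n0. Qed.

Section NP.
Local Open Scope nat_scope.
Lemma nat_part n g (c m u : 'I_g -> nat) (d k : nat) :
  (forall i, c i * m i = n) -> (forall i, 0 < c i) -> (forall i, coprime (u i) n) ->
  n ^ (g + g) * k = d * ((\prod_(i < g) (c i * u i)) * (\prod_(i < g) (c i * u i))) * d ->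
  \prod_(i < g) m i %| d.
Proof.
move=> hcm hc hu h.
set C := \prod_(i < g) c i; set Mm := \prod_(i < g) m i; set U := \prod_(i < g) u i.
have hng : n ^ g = C * Mm.
  rewrite -big_split /=; transitivity (\prod_(i < g) n).
    by rewrite prod_nat_const card_ord.
  by apply: eq_bigr => i _; rewrite hcm.
have hP : \prod_(i < g) (c i * u i) = C * U by rewrite big_split.
have C0 : 0 < C by rewrite prodn_gt0.
have hUn : coprime U n.
  apply: (big_ind (fun x => coprime x n)) => //; first exact: coprime1n.
  by move=> x y hx hy; rewrite coprimeMl hx hy.
have hUM : coprime U Mm.
  apply: (coprime_dvdr (n := n ^ g)); first by rewrite hng dvdn_mull.
  exact: coprimeXr.
have e : n ^ (g + g) = (C * Mm) ^ 2 by rewrite -hng -expnM muln2 addnn.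
have h' := h; rewrite e hP in h'.
have hdiv : (C ^ 2) * (Mm ^ 2) %| (C ^ 2) * (d ^ 2 * U ^ 2).
  apply/dvdnP; exists k.
  rewrite [RHS](_ : _ = (C * Mm) ^ 2 * k); last by ring.
  rewrite h'; ring.
rewrite dvdn_pmul2l ?expn_gt0 ?C0 // Gauss_dvdl in hdiv; last first.
  by apply: coprimeXl; apply: coprimeXr; rewrite coprime_sym.
by rewrite -(dvdn_pexp2r _ _ (isT : 0 < 2)).
Qed.
End NP.

Lemma prod_mm n r g (hn : (1 < n)%N) (hr : (r <= g)%N) (a : 'I_r -> 'Z_n) :
  (\prod_(i < g) mm a i = \prod_(i < r) AnnZ (a i))%N.
Proof.
rewrite [RHS](eq_bigr (fun i : 'I_r => mm a i)); last first.
  by move=> i _; rewrite -(mm_widen hn hr).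
rewrite (big_ord_widen g (mm a) hr) [RHS]big_mkcond /=.
apply: eq_bigr => i _; case: ifP => //.
by move/negbT; rewrite -leqNgt => /(mm_out a (ltnW hn)) ->.
Qed.

Lemma lower (n g r : nat) (hn : (1 < n)%N) (hr : (r <= g)%N)
  (E : 'M[int]_(g + g)) (hE : E \in unitmx)
  (a : 'I_r -> 'Z_n) (M : 'M[int]_(g + g)) :
  \det M != 0 -> pullback_zero hr E a M ->
  (\prod_(i < r) AnnZ (a i) <= `|\det M|)%N.
Proof.
move=> hM hP.
have n0 : (0 < n)%N by exact: ltnW.
set Nm := M *m E.
have hdetE : `|\det E|%N = 1%N by move: hE; rewrite unitmxE => /orP [] /eqP ->.
have hdet : `|\det Nm|%N = `|\det M|%N by rewrite det_mulmx abszM hdetE muln1.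
pose T (k l : 'I_(g + g)) (i : 'I_g) : int :=
  Nm k (lshift g i) * Nm l (rshift g i) - Nm k (rshift g i) * Nm l (lshift g i).
have hT : forall k l, \sum_(i < g) (be a i)%:R * (T k l i)%:~R = 0 :> 'Z_n.
  move=> k l; rewrite -[RHS](hP k l) /omega.
  rewrite (bigID (fun i : 'I_g => (i < r)%N)) /= [X in _ + X]big1 ?addr0; last first.
    move=> i; rewrite -leqNgt => hi.
    by rewrite be_eq al_out // natrD natrM (pchar_Zp hn) mul0r addr0 mul0r.
  rewrite (big_ord_narrow (F := fun i => (be a i)%:R * (T k l i)%:~R) hr).
  apply: eq_bigr => i _.
  rewrite be_eq natrD natrM (pchar_Zp hn) mul0r addr0 al_widen natr_Zp.
  by rewrite /T /coh1 -!row_mul !mxE.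
pose B : 'M[int]_g := diag_mx (\row_(i < g) (be a i)%:Z).
pose J : 'M[int]_(g + g) := block_mx 0 B (- B) 0.
pose G := Nm *m J *m Nm^T.
have hG1 : G = (lsubmx Nm *m B) *m (rsubmx Nm)^T - (rsubmx Nm *m B) *m (lsubmx Nm)^T.
  rewrite /G /J -{1 2}(hsubmxK Nm) mul_row_block tr_row_mx mul_row_col.
  rewrite !mulmx0 add0r addr0 mulmxN mulNmx.
  by rewrite addrC.
have hGe : forall k l, G k l = \sum_(i < g) (be a i)%:Z * T k l i.
  move=> k l; rewrite hG1 !mul_mx_diag !mxE -sumrB.
  apply: eq_bigr => i _; rewrite /T /Nm !mxE; ring.
have hdiv : forall k l, (n%:Z %| G k l)%Z.
  move=> k l; rewrite -(intr_Zp_eq0 hn) hGe -(hT k l) rmorph_sum /=.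
  by apply/eqP; apply: eq_bigr => i _; rewrite intrM pmulrn.
pose K : 'M[int]_(g + g) := \matrix_(k, l) ((G k l) %/ n%:Z)%Z.
have hGK : G = n%:Z *: K.
  by apply/matrixP => k l; rewrite [RHS]mxE [K _ _]mxE mulrC divzK.
pose S : 'M[int]_(g + g) := block_mx 0 1%:M (-1)%:M 0.
have hJ : J = S *m block_mx B 0 0 B.
  rewrite mulmx_block !mulmx0 !mul0mx !mul1mx mul_scalar_mx scaleN1r.
  by rewrite !addr0 !add0r.
have hSS : S *m S = (-1)%:M.
  rewrite mulmx_block !mulmx0 !mul0mx !mul1mx !mulmx1 !addr0 !add0r.
  by rewrite -scalar_mx_block.
have hdetS : `|\det S|%N = 1%N.
  apply/eqP; rewrite -[_ == _]andbb -muln_eq1 -abszM -det_mulmx hSS det_scalar.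
  by rewrite abszX /= exp1n.
have hdetB : `|\det B|%N = (\prod_(i < g) be a i)%N.
  rewrite det_diag (eq_bigr (fun i : 'I_g => (be a i)%:Z)); last by move=> i _; rewrite mxE.
  by rewrite -(big_morph Posz PoszM (erefl _)) absz_nat.
have hnat : (n ^ (g + g) * `|\det K| = `|\det M| * ((\prod_(i < g) be a i) * (\prod_(i < g) be a i)) * `|\det M|)%N.
  have := congr1 (fun z : 'M[int]_(g + g) => `|\det z|%N) hGK.
  rewrite detZ abszM abszX /= => <-.
  rewrite /G !det_mulmx det_tr hJ det_mulmx det_ublock !abszM hdetS hdetB mul1n.
  by rewrite /Nm det_mulmx abszM hdetE !muln1.
have hd := nat_part (c := fun i : 'I_g => cc a i) (m := fun i : 'I_g => mm a i)
  (u := fun i : 'I_g => uu a i) (fun i => cc_mm a i) (fun i => cc_gt0 hn a i)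
  (fun i => cop_uu hn a i) hnat.
rewrite -(prod_mm hn hr); apply: dvdn_leq => //.
by rewrite absz_gt0.
Qed.

Unset Implicit Arguments.
Unset Strict Implicit.

Theorem lemma3p3 (n g r : nat) (hn : (1 < n)%N) (hr : (r <= g)%N)
  (E : 'M[int]_(g + g)) (hE : E \in unitmx)
  (a : 'I_r -> 'Z_n) (ha : forall i, a i != 0) :
  (exists M : 'M[int]_(g + g),
      \det M != 0 /\ pullback_zero hr E a M /\
      `|\det M|%N = (\prod_(i < r) AnnZ (a i))%N) /\
  (forall M : 'M[int]_(g + g),
      \det M != 0 -> pullback_zero hr E a M ->
      (\prod_(i < r) AnnZ (a i) <= `|\det M|)%N).
Proof.
split; first exact: existence.
by move=> M hM hP; apply: lower hP.
Qed.
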